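(* Let $E\in\mathbb{R}^{n\times n}$. If there exists a diagonal positive definite matrix $P\in\mathbb{R}^{n\times n}$ such that $$E^\top P+PE-2P\prec 0,$$ then $E\in\mathbb{B}_\Theta$, i.e. $\operatorname{rank}(I_n-\Theta E)=n$ for every diagonal positive definite matrix $\Theta\in\mathbb{R}^{n\times n}$ with $\Theta\preceq I_n$.
   Context: For a square matrix $E\in\mathbb{R}^{n\times n}$, we write $E\in\mathbb{B}_\Theta$ if $\operatorname{rank}(I_n-\Theta E)=n$ for all diagonal positive definite $\Theta\in\mathbb{R}^{n\times n}$ satisfying $\Theta\preceq I_n$. The notation $\prec 0$, $\preceq$ refers to the Loewner order on symmetric matrices. *)

(* Defs.v *)
From HB Require Import structures.
From mathcomp Require Import all_boot all_order all_algebra.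
Set Implicit Arguments. Unset Strict Implicit. Unset Printing Implicit Defensive.
Import Order.TTheory GRing.Theory Num.Theory.
Local Open Scope ring_scope.

Definition symmetric_mx (R : pzRingType) (n : nat) (A : 'M[R]_n) : Prop := A^T = A.

Definition negdef_mx (R : realFieldType) (n : nat) (A : 'M[R]_n) : Prop :=
  symmetric_mx A /\ forall x : 'cV[R]_n, x != 0 -> (x^T *m A *m x) 0 0 < 0.

Definition possemidef_mx (R : realFieldType) (n : nat) (A : 'M[R]_n) : Prop :=
  symmetric_mx A /\ forall x : 'cV[R]_n, 0 <= (x^T *m A *m x) 0 0.

Definition loewner_le (R : realFieldType) (n : nat) (A B : 'M[R]_n) : Prop :=
  possemidef_mx (B - A).

(* Diagonal positive definite matrix: diagonal with positive diagonal entries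
   (for diagonal matrices, positive definiteness is equivalent to this; we
   state it with the Loewner definition to stay close to the paper). *)
Definition diag_posdef (R : realFieldType) (n : nat) (A : 'M[R]_n) : Prop :=
  is_diag_mx A /\ symmetric_mx A /\
  forall x : 'cV[R]_n, x != 0 -> 0 < (x^T *m A *m x) 0 0.

Definition in_B_Theta (R : realFieldType) (n : nat) (E : 'M[R]_n) : Prop :=
  forall Theta : 'M[R]_n, diag_posdef Theta -> loewner_le Theta 1%:M ->
    \rank (1%:M - Theta *m E) = n.

(* Main.v *)
Require Import Defs.
From HB Require Import structures.
From mathcomp Require Import all_boot all_order all_algebra.
Import Order.TTheory GRing.Theory Num.Theory.
Local Open Scope ring_scope.
From mathcomp Require Import ring.
Lemma quad_delta (R : comPzRingType) n (A : 'M[R]_n) i :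
  ((delta_mx i ord0 : 'cV[R]_n)^T *m A *m (delta_mx i ord0 : 'cV[R]_n)) 0 0 = A i i.
Proof.
rewrite !mxE (bigD1 i) //= big1 ?addr0; last first.
  by move=> j ji; rewrite !mxE; case: eqP => [e|]; [by rewrite e eqxx in ji | rewrite mulr0].
rewrite !mxE !eqxx mulr1 (bigD1 i) //= big1 ?addr0 ?mxE ?eqxx ?mul1r //.
by move=> j ji; rewrite !mxE; case: eqP => [e|]; [by rewrite e eqxx in ji | rewrite mul0r].
Qed.
Lemma quad_diag (R : comPzRingType) n (d : 'rV[R]_n) (u w : 'cV[R]_n) :
  (u^T *m diag_mx d *m w) 0 0 = \sum_i u i 0 * d 0 i * w i 0.
Proof.
rewrite !mxE; apply: eq_bigr => i _; rewrite mul_mx_diag !mxE.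
by [].
Qed.

Lemma quad_lin (R : comPzRingType) n (A B C : 'M[R]_n) (x : 'cV[R]_n) c :
  (x^T *m (A + B - c *: C) *m x) 0 0 =
  (x^T *m A *m x) 0 0 + (x^T *m B *m x) 0 0 - c * (x^T *m C *m x) 0 0.
Proof.
by rewrite mulmxDr mulmxDl mulmxN mulNmx !mulmxDr !mulmxDl -scalemxAr -scalemxAl !mxE.
Qed.

Theorem lemma1 (R : realFieldType) (n : nat) (E : 'M[R]_n) :
  (exists P : 'M[R]_n, diag_posdef P /\
     negdef_mx (E^T *m P + P *m E - 2%:R *: P)) ->
  in_B_Theta E.
Proof.
case=> P [[/diag_mxP [p ->] [_ Ppos]] [_ Hneg]] Th [/diag_mxP [t ->] [_ Tpos]] [_ Tle].
have pp i : 0 < p 0 i.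
  have := Ppos (delta_mx i ord0); rewrite quad_delta mxE eqxx mulr1n; apply.
  apply/eqP => /matrixP /(_ i ord0); rewrite !mxE !eqxx /= => /eqP; by rewrite oner_eq0.
have tp i : 0 < t 0 i.
  have := Tpos (delta_mx i ord0); rewrite quad_delta mxE eqxx mulr1n; apply.
  apply/eqP => /matrixP /(_ i ord0); rewrite !mxE !eqxx /= => /eqP; by rewrite oner_eq0.
have t1 i : t 0 i <= 1.
  have := Tle (delta_mx i ord0); rewrite quad_delta !mxE eqxx mulr1n subr_ge0; by [].
apply/eqP; apply: contraT => Hr.
have : \det (1%:M - diag_mx t *m E)^T == 0.
  rewrite det_tr; apply: contraR Hr => /negP Hd.
  have : (1%:M - diag_mx t *m E) \in unitmx by rewrite unitmxE unitfE; apply/negP.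
  by rewrite -row_free_unit.
case/det0P => v v0 Hv.
set x := v^T.
have x0 : x != 0 by apply: contra v0 => /eqP Hx; rewrite -[v]trmxK -/x Hx trmx0.
have Hx : x = diag_mx t *m (E *m x).
  apply/eqP; rewrite -subr_eq0; apply/eqP.
  have := congr1 trmx Hv; rewrite trmx_mul trmxK trmx0 -/x => <-.
  by rewrite mulmxBl mul1mx mulmxA.
set y := E *m x.
have := Hneg x x0.
have e1 : (x^T *m (E^T *m diag_mx p) *m x) 0 0 = \sum_i y i 0 * p 0 i * x i 0.
  by rewrite mulmxA -trmx_mul quad_diag.
have e2 : (x^T *m (diag_mx p *m E) *m x) 0 0 = \sum_i x i 0 * p 0 i * y i 0.
  by rewrite mulmxA -[_ *m E *m x]mulmxA quad_diag.
rewrite quad_lin e1 e2 quad_diag.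
apply: contraLR => _; rewrite -leNgt.
have xi i : x i 0 = t 0 i * y i 0 by rewrite {1}Hx mul_diag_mx mxE.
rewrite mulr_sumr -big_split -sumrB /=; apply: sumr_ge0 => i _.
rewrite xi.
have := pp i; have := tp i; have := t1 i; move: (t 0 i) (p 0 i) (y i 0) => a b c ha hb hc.
rewrite !mulrA.
have h1 : 0 <= 1 - a by rewrite subr_ge0.
have : 0 <= 2 * (b * a * (1 - a) * (c * c)).
  apply: mulr_ge0 => //; apply: mulr_ge0; last by rewrite -expr2 sqr_ge0.
  by rewrite !mulr_ge0 // ltW.
move=> H; apply: (le_trans H); rewrite le_eqVlt; apply/orP; left; apply/eqP.
ring.
Qed.
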